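(* Let $\mu$ be the probability measure on $\mathrm{Homeo}_+(\mathbb{R})$ giving mass $1/2$ to each of the maps \[ f_1(x)=\begin{cases}x+1,& x<0,\\ 2x+1,& x\ge 0,\end{cases}\qquad f_2(x)=x-1. \] Then $\phi_+\equiv 1$ (every point tends to $+\infty$ almost surely under the forward dynamics), while $\hat\phi_0\equiv 1$ (under the inverse dynamics, for every point the random orbit almost surely tends neither to $+\infty$ nor to $-\infty$).
   Context: Let $g_1,g_2,\dots$ be i.i.d. random maps with law $\mu$, and set $F_n=g_n\circ\cdots\circ g_1$ (forward dynamics); the inverse dynamics is the random dynamical system defined by $\hat\mu$, the image of $\mu$ under $f\mapsto f^{-1}$, with random compositions $\hat F_n$. Let $\phi_+(x)=\mathbb{P}(\lim_n F_n(x)=+\infty)$, and $\hat\phi_0(x)=1-\mathbb{P}(\lim_n\hat F_n(x)=+\infty)-\mathbb{P}(\lim_n\hat F_n(x)=-\infty)$. *)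

(* Defs.v *)
From HB Require Import structures.
From mathcomp Require Import all_boot all_order all_algebra.
From mathcomp Require Import all_classical all_reals all_analysis.
From mathcomp Require Import lra.
Set Implicit Arguments. Unset Strict Implicit. Unset Printing Implicit Defensive.
Import Order.TTheory GRing.Theory Num.Theory.
Local Open Scope classical_set_scope.
Local Open Scope ring_scope.

Section Maps.
Variable R : realType.

Definition f1 (x : R) : R := if x < 0 then x + 1 else 2 * x + 1.
Definition f2 (x : R) : R := x - 1.

Definition f1inv (y : R) : R := if y < 1 then y - 1 else (y - 1) / 2.
Definition f2inv (y : R) : R := y + 1.

Lemma f1K : cancel f1 f1inv.
Proof.
move=> x; rewrite /f1; case: ifPn => hx; rewrite /f1inv.
  have -> : x + 1 < 1 by lra.
  by rewrite addrK.
rewrite -leNgt in hx.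
have -> : (2 * x + 1 < 1) = false by apply/negbTE; rewrite -leNgt; lra.
by rewrite addrK mulrAC divff ?pnatr_eq0 // mul1r.
Qed.

Lemma f1invK : cancel f1inv f1.
Proof.
move=> y; rewrite /f1inv; case: ifPn => hy; rewrite /f1.
  have -> : y - 1 < 0 by lra.
  by rewrite subrK.
rewrite -leNgt in hy.
have -> : ((y - 1) / 2 < 0) = false by apply/negbTE; rewrite -leNgt; lra.
by rewrite mulrC divfK ?pnatr_eq0 // subrK.
Qed.

Lemma f2K : cancel f2 f2inv. Proof. by move=> x; rewrite /f2 /f2inv subrK. Qed.
Lemma f2invK : cancel f2inv f2. Proof. by move=> y; rewrite /f2 /f2inv addrK. Qed.

(* random map selected by a coin: true -> f1, false -> f2 (law mu) *)
Definition gsel (b : bool) : R -> R := if b then f1 else f2.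
(* inverse random map (law \hat mu, the image of mu under f |-> f^-1) *)
Definition ginvsel (b : bool) : R -> R := if b then f1inv else f2inv.

(* random composition G_n = g_n o ... o g_1, with g_(k+1) = sel (X k w) *)
Fixpoint rcomp (sel : bool -> R -> R) (X : nat -> bool) (n : nat) (x : R) : R :=
  if n is m.+1 then sel (X m) (rcomp sel X m x) else x.

End Maps.

Definition iid_fair_coins (R : realType) (d : measure_display)
    (T : measurableType d) (P : probability T R) (X : nat -> T -> bool) : Prop :=
  [/\ (forall n, measurable_fun setT (X n)),
      (forall n (b : bool), P (X n @^-1` [set b]) = (2%:R^-1)%:E) &
      (forall (s : seq nat) (B : nat -> set bool), uniq s ->
         P (\bigcap_(i in [set` s]) (X i @^-1` B i))
         = (\prod_(i <- s) P (X i @^-1` B i))%E)].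

(* Main.v *)
Require Import Defs.
From HB Require Import structures.
From mathcomp Require Import all_boot all_order all_algebra.
From mathcomp Require Import all_classical all_reals all_analysis.
From mathcomp Require Import ring lra.
Import Order.TTheory GRing.Theory Num.Theory.
Local Open Scope classical_set_scope.
Local Open Scope ring_scope.
Set Implicit Arguments. Unset Strict Implicit. Unset Printing Implicit Defensive.


Definition zs : nat -> bool := fun _ => false.
Definition consb (c : bool) (w : nat -> bool) : nat -> bool :=
  fun i => if i is j.+1 then w j else c.
Definition shiftb (w : nat -> bool) : nat -> bool := fun i => w i.+1.
Definition concatb (a : nat) (v v' : nat -> bool) : nat -> bool :=
  fun i => if (i < a)%N then v i else v' (i - a)%N.
Definition shiftk (k : nat) (w : nat -> bool) : nat -> bool := fun i => w (k + i)%N.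

Section Ex.
Variable R : realType.

Fixpoint Ex (n : nat) (F : (nat -> bool) -> R) : R :=
  if n is m.+1 then (Ex m (fun w => F (consb true w)) + Ex m (fun w => F (consb false w))) / 2
  else F zs.

Lemma Ex_le n (F G : (nat -> bool) -> R) : (forall w, F w <= G w) -> Ex n F <= Ex n G.
Proof.
elim: n F G => [|n IH] F G H /=; first exact: H.
by rewrite ler_pM2r ?invr_gt0 ?ltr0n // lerD // IH.
Qed.

Lemma Ex_cst n (c : R) : Ex n (fun _ => c) = c.
Proof. by elim: n => [|n IH] //=; rewrite IH; field. Qed.

Lemma Ex_lin n (a b : R) (F G : (nat -> bool) -> R) :
  Ex n (fun w => a * F w + b * G w) = a * Ex n F + b * Ex n G.
Proof.
elim: n F G => [|n IH] F G //=.
rewrite (IH (fun w => F (consb true w))) (IH (fun w => F (consb false w))).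
by field.
Qed.

Lemma concat0 v v' : concatb 0 v v' = v'.
Proof. by apply/funext => i; rewrite /concatb /= subn0. Qed.

Lemma concatS a c v v' : concatb a.+1 (consb c v) v' = consb c (concatb a v v').
Proof. by apply/funext => -[|i] //=; rewrite /concatb /= ltnS subSS. Qed.

Lemma Ex_markov a b F : Ex (a + b) F = Ex a (fun v => Ex b (fun v' => F (concatb a v v'))).
Proof.
elim: a F => [|a IH] F /=.
  by rewrite add0n; congr Ex; apply/funext => v'; rewrite concat0.
rewrite !IH.
by congr ((_ + _) / 2); congr Ex; apply/funext => v;
  congr Ex; apply/funext => v'; rewrite concatS.
Qed.

Lemma shiftk_concat k v v' : shiftk k (concatb k v v') = v'.
Proof.
apply/funext => i; rewrite /shiftk /concatb.
by rewrite ltnNge leq_addr /= addKn.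
Qed.

Lemma Ex_shift k N (G : (nat -> bool) -> R) :
  Ex (k + N) (fun w => G (shiftk k w)) = Ex N G.
Proof.
rewrite Ex_markov.
under [X in Ex k X]funext => v do under [X in Ex N X]funext => v' do rewrite shiftk_concat.
by rewrite Ex_cst.
Qed.

End Ex.


Definition dep (n : nat) (F : (nat -> bool) -> bool) :=
  forall v v', (forall i, (i < n)%N -> v i = v' i) -> F v = F v'.

Section Meas.
Variables (R : realType) (d : measure_display) (T : measurableType d)
  (P : probability T R) (X : nat -> T -> bool).
Variable HX : iid_fair_coins P X.

Definition Rect (s : seq nat) (B : nat -> set bool) : set T :=
  \bigcap_(i in [set` s]) (X i @^-1` B i).

Lemma Xmeas i (B : set bool) : measurable (X i @^-1` B).
Proof.
case: HX => mX _ _.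
by rewrite -[X in measurable X]setTI; apply: mX.
Qed.

Lemma Rect_meas s B : measurable (Rect s B).
Proof.
apply: fin_bigcap_measurable; first exact: finite_seq.
by move=> i _; apply: Xmeas.
Qed.

Lemma Rect_cons n s B b : n \notin s ->
  Rect (n :: s) (fun i => if i == n then [set b] else B i) = X n @^-1` [set b] `&` Rect s B.
Proof.
move=> ns; apply/seteqP; split => w /=.
  move=> H; split.
    by have := H n; rewrite /= eqxx; apply; rewrite /= inE eqxx.
  move=> i /= si; have := H i; rewrite /=.
  have -> : (i == n) = false by apply/negbTE; apply: contraNneq ns => <-.
  by apply; rewrite inE si orbT.
move=> [Hn H] i /=; rewrite inE => /orP[/eqP->|si]; first by rewrite eqxx.
have -> : (i == n) = false by apply/negbTE; apply: contraNneq ns => <-.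
exact: H.
Qed.

Lemma Rect_cons_P n s B b : n \notin s -> uniq s ->
  P (Rect (n :: s) (fun i => if i == n then [set b] else B i)) = ((2%:R^-1)%:E * P (Rect s B))%E.
Proof.
move=> ns us; case: HX => _ Hh Hp.
rewrite /Rect Hp /= ?ns // big_cons eqxx Hh; congr (_ * _)%E.
rewrite Hp //; apply: eq_big_seq => i si.
by have -> : (i == n) = false by apply/negbTE; apply: contraNneq ns => <-.
Qed.

Lemma Rect_fin s B : P (Rect s B) = (fine (P (Rect s B)))%:E.
Proof.
rewrite fineK //; rewrite ge0_fin_numE ?measure_ge0 //.
by apply: (le_lt_trans (probability_le1 P (Rect_meas s B))); rewrite ltry.
Qed.

Lemma meas_main n : forall s B F, uniq s -> (forall i, i \in s -> (n <= i)%N) -> dep n F ->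
  measurable (Rect s B `&` [set w | F (X^~ w)]) /\
  P (Rect s B `&` [set w | F (X^~ w)]) = (P (Rect s B) * (Ex n (fun v => (F v)%:R))%:E)%E.
Proof.
elim: n => [|n IH] s B F us sn dF.
  have eF w : F (X^~ w) = F zs by apply: dF.
  rewrite /=; case Hz : (F zs).
    have -> : Rect s B `&` [set w | F (X^~ w)] = Rect s B.
      by apply/seteqP; split => w /=; [case|move=> H; split=> //; rewrite eF].
    by split; [exact: Rect_meas|rewrite mule1].
  have -> : Rect s B `&` [set w | F (X^~ w)] = set0.
    by apply/seteqP; split => w //= [_]; rewrite eF Hz.
  by split; [exact: measurable0|rewrite measure0 mule0].
pose Fb b := fun v => F (concatb n v (consb b zs)).
pose Bb b := fun i => if i == n then [set b] else B i.
have ns : n \notin s by apply/negP => /sn; rewrite ltnn.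
have us' : uniq (n :: s) by rewrite /= ns.
have sn' : forall i, i \in n :: s -> (n <= i)%N.
  by move=> i; rewrite inE => /orP[/eqP->//|/sn /ltnW].
have dFb b : dep n (Fb b).
  move=> v v' H; rewrite /Fb; apply: dF => i _; rewrite /concatb.
  by case: ifP => // /H.
have Hb b := IH (n :: s) (Bb b) (Fb b) us' sn' (dFb b).
have eqF w b : X n w = b -> F (X^~ w) = Fb b (X^~ w).
  move=> Hw; rewrite /Fb; apply: dF => i; rewrite ltnS leq_eqVlt => /orP[/eqP->|lin].
    by rewrite /concatb ltnn subnn.
  by rewrite /concatb lin.
have split_eq : Rect s B `&` [set w | F (X^~ w)] =
   (Rect (n :: s) (Bb true) `&` [set w | Fb true (X^~ w)]) `|`
   (Rect (n :: s) (Bb false) `&` [set w | Fb false (X^~ w)]).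
  rewrite /Bb !Rect_cons //; apply/seteqP; split => w /=.
    move=> [Hr HF]; case Hw : (X n w).
      by left; split => //; rewrite -(eqF w true Hw).
    by right; split => //; rewrite -(eqF w false Hw).
  by move=> [[[Hw Hr] HF]|[[Hw Hr] HF]]; split => //; rewrite (eqF w _ Hw).
have disj : (Rect (n :: s) (Bb true) `&` [set w | Fb true (X^~ w)]) `&`
   (Rect (n :: s) (Bb false) `&` [set w | Fb false (X^~ w)]) = set0.
  rewrite /Bb !Rect_cons //; apply/seteqP; split => w //=.
  by move=> [[[H1 _] _] [[H2 _] _]]; move: H1; rewrite H2.
rewrite split_eq; split; first by apply: measurableU; [case: (Hb true)|case: (Hb false)].
rewrite measureU; [|by case: (Hb true)|by case: (Hb false)|exact: disj].
transitivity ((P (Rect (n :: s) (Bb true)) * (Ex n (fun v => (Fb true v)%:R))%:E) +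
   (P (Rect (n :: s) (Bb false)) * (Ex n (fun v => (Fb false v)%:R))%:E))%E.
  by congr (_ + _)%E; [exact: (proj2 (Hb true))|exact: (proj2 (Hb false))].
rewrite /Bb (Rect_cons_P B true ns us) (Rect_cons_P B false ns us).
have -> : Ex n.+1 (fun v => (F v)%:R) =
    2^-1 * Ex n (fun v => (Fb true v)%:R) + 2^-1 * Ex n (fun v => (Fb false v)%:R) :> R.
  rewrite -addn1 Ex_markov -Ex_lin /=; congr Ex; apply/funext => v.
  by rewrite /Fb; field.
rewrite (Rect_fin s B) -!EFinM -EFinD; congr EFin; ring.
Qed.

Lemma meas_ev n F : dep n F ->
  measurable [set w | F (X^~ w)] /\ P [set w | F (X^~ w)] = (Ex n (fun v => (F v)%:R))%:E.
Proof.
move=> dF; have [H1 H2] := meas_main (s := [::]) (fun _ => setT) (erefl _) (fun i => ltac:(by [])) dF.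
have E : Rect [::] (fun _ => setT) = setT.
  by apply/seteqP; split => w //= _ i.
move: H1 H2; rewrite E setTI => H1 ->; split => //.
by rewrite probability_setT mul1e.
Qed.

End Meas.


Section Dyn.
Variable R : realType.
Implicit Types (sel : bool -> R -> R) (v w : nat -> bool).

Fixpoint trajF sel v (k : nat) (y : R) : R :=
  if k is k'.+1 then trajF sel (shiftb v) k' (sel (v 0%N) y) else y.

Lemma trajF_S sel v k y : trajF sel v k.+1 y = sel (v k) (trajF sel v k y).
Proof. by elim: k v y => [|k IH] v y //=; rewrite -IH. Qed.

Lemma rcomp_trajF sel v k y : rcomp sel v k y = trajF sel v k y.
Proof. by elim: k => [|k IH] //; rewrite trajF_S -IH. Qed.

Lemma trajF_dep sel k v v' y : (forall i, (i < k)%N -> v i = v' i) ->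
  trajF sel v k y = trajF sel v' k y.
Proof.
elim: k v v' y => [|k IH] v v' y H //=.
rewrite (H 0%N) //; apply: IH => i Hi; exact: H.
Qed.

Lemma trajF_add sel v k j y :
  trajF sel v (k + j) y = trajF sel (shiftk k v) j (trajF sel v k y).
Proof.
elim: k v y => [|k IH] v y /=.
  by congr trajF; apply/funext => i; rewrite /shiftk add0n.
rewrite IH; congr trajF; apply/funext => i; by rewrite /shiftk /shiftb addSn.
Qed.

Fixpoint stayb sel (p : R -> bool) (N : nat) (y : R) v : bool :=
  p y && (if N is N'.+1 then stayb sel p N' (sel (v 0%N) y) (shiftb v) else true).

Definition stP sel p N y : R := Ex N (fun v => (stayb sel p N y v)%:R).
Definition nP sel p N y : R := Ex N (fun v => (~~ stayb sel p N y v)%:R).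

Lemma stP_S sel p N y : stP sel p N.+1 y =
  if p y then (stP sel p N (sel true y) + stP sel p N (sel false y)) / 2 else 0.
Proof.
rewrite /stP /=; case: (p y) => //=.
by rewrite !(@Ex_cst R) /= addr0 mul0r.
Qed.

Lemma nP_S sel p N y : nP sel p N.+1 y =
  if p y then (nP sel p N (sel true y) + nP sel p N (sel false y)) / 2 else 1.
Proof.
rewrite /nP /=; case: (p y) => //=.
by rewrite !(@Ex_cst R) /=; field.
Qed.

Lemma Ex_ind_ge0 N (F : (nat -> bool) -> bool) : 0 <= Ex N (fun v => (F v)%:R : R).
Proof.
apply: (le_trans _ (@Ex_le R N (fun _ => 0) _ _)); first by rewrite Ex_cst.
by move=> v; case: (F v).
Qed.

Lemma Ex_ind_le1 N (F : (nat -> bool) -> bool) : Ex N (fun v => (F v)%:R : R) <= 1.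
Proof.
apply: (le_trans (@Ex_le R N _ (fun _ => 1) _)); last by rewrite Ex_cst.
by move=> v; case: (F v).
Qed.

Lemma stay_bound sel (p : R -> bool) (Phi : nat -> R -> R) :
  (forall y, (p y)%:R <= Phi 0%N y) ->
  (forall N y, ~~ p y -> 0 <= Phi N.+1 y) ->
  (forall N y, p y -> (Phi N (sel true y) + Phi N (sel false y)) / 2 <= Phi N.+1 y
                      \/ 1 <= Phi N.+1 y) ->
  forall N y, stP sel p N y <= Phi N y.
Proof.
move=> H0 Hn Hs; elim => [|N IH] y.
  by rewrite /stP /= andbT; exact: H0.
rewrite stP_S; case: ifP => py; last by apply: Hn; rewrite py.
case: (Hs N y py) => H; last first.
  have := Ex_ind_le1 N.+1 (stayb sel p N.+1 y).
  rewrite -/(stP sel p N.+1 y) stP_S py => h; exact: le_trans h H.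
apply: le_trans H; rewrite ler_pM2r ?invr_gt0 ?ltr0n //; exact: lerD.
Qed.

Lemma hit_bound sel (p : R -> bool) (Phi : R -> R) :
  (forall y, (~~ p y)%:R <= Phi y) ->
  (forall y, p y -> (Phi (sel true y) + Phi (sel false y)) / 2 <= Phi y) ->
  forall N y, nP sel p N y <= Phi y.
Proof.
move=> H0 Hs; elim => [|N IH] y.
  by rewrite /nP /= andbT; exact: H0.
rewrite nP_S; case: ifP => py; last by have := H0 y; rewrite py.
apply: le_trans (Hs y py); rewrite ler_pM2r ?invr_gt0 ?ltr0n //; exact: lerD.
Qed.

Lemma Q_super sel (G : R -> R) :
  (forall y, (G (sel true y) + G (sel false y)) / 2 <= G y) ->
  forall k y, Ex k (fun v => G (trajF sel v k y)) <= G y.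
Proof.
move=> HG; elim => [|k IH] y //=.
apply: le_trans (HG y); rewrite ler_pM2r ?invr_gt0 ?ltr0n //; exact: lerD.
Qed.

Lemma Q_bound sel (G : R -> R) (L c : R) :
  (forall y, (G (sel true y) + G (sel false y)) / 2 <= G y) ->
  (forall y, G y <= ((y < L)%R)%:R + c) ->
  forall k y, Ex k (fun v => G (trajF sel v k y)) <= stP sel (fun y => y < L) k y + c.
Proof.
move=> HG Hb; elim => [|k IH] y.
  by rewrite /stP /= andbT; exact: Hb.
rewrite stP_S; case: ifP => yL.
  rewrite /=; have h1 := IH (sel true y); have h2 := IH (sel false y); lra.
apply: le_trans (Q_super HG k.+1 y) _; have := Hb y; rewrite yL add0r; exact.
Qed.

Lemma stay_anti sel (L : R) N y y' v : (forall c, {homo sel c : a b / a <= b}) ->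
  y' <= y -> stayb sel (fun t => t < L) N y v -> stayb sel (fun t => t < L) N y' v.
Proof.
move=> Hm; elim: N y y' v => [|N IH] y y' v yy /=.
  by rewrite !andbT => /(le_lt_trans yy).
move=> /andP[yL H]; rewrite (le_lt_trans yy yL) /=.
by apply: IH H; apply: Hm.
Qed.

Lemma stay_cmp sel sel' (L : R) N y v : (forall c, {homo sel c : a b / a <= b}) ->
  (forall c t, sel' c t <= sel c t) ->
  stayb sel (fun t => t < L) N y v -> stayb sel' (fun t => t < L) N y v.
Proof.
move=> Hm Hc; elim: N y v => [|N IH] y v //= /andP[yL H]; rewrite yL /=.
apply: IH; apply: stay_anti H => //; exact: Hc.
Qed.

Lemma stay_eqdyn sel sel' (p : R -> bool) N y v :
  (forall c t, p t -> sel' c t = sel c t) ->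
  stayb sel p N y v = stayb sel' p N y v.
Proof.
move=> Hc; elim: N y v => [|N IH] y v //=.
case py: (p y) => //=; rewrite (Hc _ _ py); exact: IH.
Qed.

End Dyn.


Ltac fside := repeat (apply/andP; split); lra.

Section Bounds.
Variable R : realType.

Lemma le_by_diff (a b num den : R) : 0 < den -> 0 <= num -> b - a = num / den -> a <= b.
Proof. by move=> d0 n0 E; rewrite -subr_ge0 E divr_ge0 // ltW. Qed.

Definition BM (M y : R) : R := if y < M then 1 else 3 / (y - M + 3).

Lemma BM_ge0 M y : 0 <= BM M y.
Proof. rewrite /BM; case: ifPn => // /negbTE; rewrite ltNge => /negbFE h. by rewrite divr_ge0 //; lra. Qed.

Lemma BM_le1 M y : BM M y <= 1.
Proof.
rewrite /BM; case: ifPn => // /negbTE; rewrite ltNge => /negbFE h.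
apply: (@le_by_diff _ _ (y - M) (y - M + 3)); [lra|lra|field; lra].
Qed.

Lemma BM_dec M L y : M <= L -> L <= y -> BM M y <= BM M L.
Proof.
move=> ML Ly; rewrite /BM.
have -> : (y < M) = false by apply/negbTE; rewrite -leNgt; lra.
have -> : (L < M) = false by apply/negbTE; rewrite -leNgt; lra.
apply: (@le_by_diff _ _ (3 * (y - L)) ((y - M + 3) * (L - M + 3))).
- by apply: mulr_gt0; lra.
- by apply: mulr_ge0; lra.
- by field; fside.
Qed.

Lemma BM_split M L y : M <= L -> BM M y <= ((y < L)%R)%:R + BM M L.
Proof.
move=> ML; case: (ltP y L) => yL /=.
  by have := BM_le1 M y; have := BM_ge0 M L; lra.
by rewrite add0r; apply: BM_dec.
Qed.

Lemma BM_super M : 0 <= M -> forall y,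
  (BM M (gsel true y) + BM M (gsel false y)) / 2 <= BM M y.
Proof.
move=> M0 y; rewrite /gsel /f1 /f2.
case: (ltP y M) => yM.
  by rewrite {3}/BM yM; have := BM_le1 M (if y < 0 then y + 1 else 2 * y + 1);
     have := BM_le1 M (y - 1); lra.
have -> : (y < 0) = false by apply/negbTE; rewrite -leNgt; lra.
rewrite /BM.
have -> : (2 * y + 1 < M) = false by apply/negbTE; rewrite -leNgt; lra.
have -> : (y < M) = false by apply/negbTE; rewrite -leNgt; lra.
case: (ltP (y - 1) M) => y1M.
  apply: (@le_by_diff _ _ (6 * (2 * y + 1 - M + 3) - 3 * (y - M + 3) - (2 * y + 1 - M + 3) * (y - M + 3))
     (2 * (2 * y + 1 - M + 3) * (y - M + 3))).
  - by apply: mulr_gt0; [apply: mulr_gt0|]; lra.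
  - by nra.
  - by field; fside.
apply: (@le_by_diff _ _ (6 * (2 * y + 1 - M + 3) * (y - 1 - M + 3) - 3 * (y - M + 3) * (y - 1 - M + 3)
      - 3 * (2 * y + 1 - M + 3) * (y - M + 3))
   (2 * (2 * y + 1 - M + 3) * (y - M + 3) * (y - 1 - M + 3))).
- by apply: mulr_gt0; [apply: mulr_gt0; [apply: mulr_gt0|]|]; lra.
- by nra.
- by field; fside.
Qed.

End Bounds.

Section SRW.
Variable R : realType.

Definition hR (L lo y : R) : R := (L + 1 - y) / (L + 1 - lo).
Definition phR (L lo y : R) : R := (y - lo + 1) * (L + 1 - y).
Definition PhiS (L lo : R) (k : nat) (y : R) : R :=
  Num.max (hR L lo y) 0 + Num.max (phR L lo y) 0 / (k.+1)%:R.

Lemma mx0 (x : R) : 0 <= Num.max x 0.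
Proof. by rewrite le_max lexx orbT. Qed.
Lemma mxge (x : R) : x <= Num.max x 0.
Proof. by rewrite le_max lexx. Qed.

Lemma PhiS_ge0 L lo k y : 0 <= PhiS L lo k y.
Proof. by rewrite /PhiS addr_ge0 ?mx0 // divr_ge0 ?mx0. Qed.

Lemma hR_ge1 L lo y : lo < L -> y <= lo -> 1 <= hR L lo y.
Proof.
move=> lL ylo; apply: (le_by_diff (num := lo - y) (den := L + 1 - lo)); [lra|lra|].
by rewrite /hR; field; lra.
Qed.

Lemma PhiS_hge1 L lo k y : lo < L -> y <= lo -> 1 <= PhiS L lo k y.
Proof.
move=> lL ylo; rewrite /PhiS; have := hR_ge1 lL ylo; have := mxge (hR L lo y).
have : 0 <= Num.max (phR L lo y) 0 / (k.+1)%:R by rewrite divr_ge0 ?mx0.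
set t := Num.max (phR L lo y) 0 / _; lra.
Qed.

Lemma srw_bound (sel : bool -> R -> R) L lo : lo < L ->
  (forall y, (sel true y = y + 1 /\ sel false y = y - 1) \/
             (sel true y = y - 1 /\ sel false y = y + 1)) ->
  forall k y, stP sel (fun t => t < L) k y <= PhiS L lo k y.
Proof.
move=> lL Hs; apply: stay_bound.
- move=> y; case: (ltP y L) => yL /=; last exact: PhiS_ge0.
  case: (leP y lo) => ylo; first exact: PhiS_hge1.
  rewrite /PhiS divr1; have := mx0 (hR L lo y); have := mxge (phR L lo y).
  have : 1 <= phR L lo y by rewrite /phR; nra.
  lra.
- by move=> N y _; apply: PhiS_ge0.
move=> N y yL.
case: (leP y lo) => ylo; first by right; apply: PhiS_hge1.
set K := (N.+1)%:R : R.
have K0 : 0 < K by rewrite ltr0n.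
have K1 : (N.+2)%:R = K + 1 by rewrite -natr1.
case: (leP (K + 1) (phR L lo y)) => hph.
  right; rewrite /PhiS K1; have := mx0 (hR L lo y); have := mxge (phR L lo y).
  move=> h1 h2.
  have : 1 <= Num.max (phR L lo y) 0 / (K + 1).
    by rewrite ler_pdivlMr; lra.
  set t := Num.max (phR L lo y) 0 / _; lra.
left.
have -> : (PhiS L lo N (sel true y) + PhiS L lo N (sel false y)) / 2 =
          (PhiS L lo N (y + 1) + PhiS L lo N (y - 1)) / 2.
  by case: (Hs y) => -[-> ->] //; rewrite addrC.
rewrite /PhiS -/K K1.
have e1 : Num.max (hR L lo (y + 1)) 0 = hR L lo (y + 1).
  by apply: max_l; rewrite /hR divr_ge0 //; lra.
have e2 : Num.max (hR L lo (y - 1)) 0 = hR L lo (y - 1).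
  by apply: max_l; rewrite /hR divr_ge0 //; lra.
have e3 : Num.max (hR L lo y) 0 = hR L lo y.
  by apply: max_l; rewrite /hR divr_ge0 //; lra.
have e4 : Num.max (phR L lo (y + 1)) 0 = phR L lo (y + 1).
  by apply: max_l; rewrite /phR; nra.
have e5 : Num.max (phR L lo (y - 1)) 0 = phR L lo (y - 1).
  by apply: max_l; rewrite /phR; nra.
have e6 : Num.max (phR L lo y) 0 = phR L lo y.
  by apply: max_l; rewrite /phR; nra.
rewrite e1 e2 e3 e4 e5 e6.
apply: (le_by_diff (num := K + 1 - phR L lo y) (den := K * (K + 1))).
- by apply: mulr_gt0; lra.
- lra.
- by rewrite /hR /phR; field; fside.
Qed.

End SRW.

Section Misc.
Variable R : realType.

Definition srw (c : bool) (y : R) : R := if c then y + 1 else y - 1.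
Definition srw' (c : bool) (y : R) : R := if c then y - 1 else y + 1.

Lemma srw_sym y : (srw true y = y + 1 /\ srw false y = y - 1) \/
                  (srw true y = y - 1 /\ srw false y = y + 1).
Proof. by left. Qed.
Lemma srw'_sym y : (srw' true y = y + 1 /\ srw' false y = y - 1) \/
                  (srw' true y = y - 1 /\ srw' false y = y + 1).
Proof. by right. Qed.

Lemma gsel_mono c : {homo (@gsel R c) : a b / a <= b}.
Proof.
move=> a b ab; case: c; rewrite /gsel /f1 /f2; last lra.
by case: (ltP a 0) => ha; case: (ltP b 0) => hb; lra.
Qed.

Lemma gsel_ge_srw c t : srw c t <= @gsel R c t.
Proof. case: c; rewrite /srw /gsel /f1 /f2 //; by case: (ltP t 0) => h; lra. Qed.

Lemma ginv_srw' c t : t < 1 -> srw' c t = @ginvsel R c t.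
Proof. by move=> t1; case: c; rewrite /srw' /ginvsel /f1inv /f2inv // t1. Qed.

Lemma ginv_lb c t : Num.min t 0 - 1 <= @ginvsel R c t.
Proof.
have h1 : Num.min t 0 <= t by rewrite ge_min lexx.
have h2 : Num.min t 0 <= 0 by rewrite ge_min lexx orbT.
case: c; rewrite /ginvsel /f1inv /f2inv; last lra.
case: ifPn => h; first lra.
move: h; rewrite -leNgt => h; lra.
Qed.

Lemma ginv_ub c t : @ginvsel R c t <= Num.max t 0 + 1.
Proof.
have h1 : t <= Num.max t 0 by rewrite le_max lexx.
have h2 : 0 <= Num.max t 0 by rewrite le_max lexx orbT.
case: c; rewrite /ginvsel /f1inv /f2inv; last lra.
case: ifPn => h; first lra.
move: h; rewrite -leNgt => h; lra.
Qed.

Lemma traj_ginv_lb v k x : Num.min x 0 - k%:R <= trajF (@ginvsel R) v k x.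
Proof.
elim: k v x => [|k IH] v x /=; first by rewrite subr0 ge_min lexx.
apply: le_trans (IH _ _).
have h1 := ginv_lb (v 0%N) x.
have h2 : Num.min x 0 <= 0 by rewrite ge_min lexx orbT.
have h3 : Num.min (Num.min x 0 - 1) 0 <= Num.min (ginvsel (v 0%N) x) 0.
  by rewrite le_min !ge_min h1 lexx !orbT.
have h4 : Num.min (Num.min x 0 - 1) 0 = Num.min x 0 - 1.
  by apply: min_l; lra.
rewrite -natr1; lra.
Qed.

Lemma traj_ginv_ub v k x : trajF (@ginvsel R) v k x <= Num.max x 0 + k%:R.
Proof.
elim: k v x => [|k IH] v x /=; first by rewrite addr0 le_max lexx.
apply: le_trans (IH _ _) _.
have h1 := ginv_ub (v 0%N) x.
have h2 : 0 <= Num.max x 0 by rewrite le_max lexx orbT.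
have h3 : Num.max (ginvsel (v 0%N) x) 0 <= Num.max x 0 + 1.
  by rewrite ge_max h1 /=; lra.
rewrite -natr1; lra.
Qed.

Lemma inv_bound N y : stP (@ginvsel R) (fun t => 2 <= t) N y <= (7/8) ^+ N * Num.max y 0 / 2.
Proof.
apply: (stay_bound (Phi := fun N y => (7/8 : R) ^+ N * Num.max y 0 / 2)).
- move=> y0; rewrite expr0 mul1r; case: (leP 2 y0) => h /=.
    by rewrite (max_l (ltW (lt_le_trans _ h))) //; lra.
  by rewrite divr_ge0 // le_max lexx orbT.
- by move=> M y0 _; rewrite !mulr_ge0 // ?exprn_ge0 // le_max lexx orbT.
move=> M y0 h2; left.
rewrite /ginvsel /f1inv /f2inv.
have -> : (y0 < 1) = false by apply/negbTE; rewrite -leNgt; lra.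
rewrite (max_l (_ : 0 <= (y0 - 1) / 2)); last by rewrite divr_ge0 //; lra.
rewrite (max_l (_ : 0 <= y0 + 1)); last lra.
rewrite (max_l (_ : 0 <= y0)); last lra.
rewrite exprS.
have e0 : 0 <= (7/8 : R) ^+ M by rewrite exprn_ge0.
move: e0; set e := (7/8 : R) ^+ M => e0.
have : 0 <= e * (y0 - 2) by nra.
lra.
Qed.

End Misc.


Section Gen.
Variable R : realType.
Implicit Types (sel : bool -> R -> R) (p : R -> bool) (v w : nat -> bool).

Lemma stayb_dep sel p N y w w' : (forall i, (i < N)%N -> w i = w' i) ->
  stayb sel p N y w = stayb sel p N y w'.
Proof.
elim: N y w w' => [|N IH] y w w' H //=.
rewrite (H 0%N) //; congr (_ && _); apply: IH => i Hi; exact: H.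
Qed.

Definition shev sel p k N x := fun v => stayb sel p N (trajF sel v k x) (shiftk k v).

Lemma shev_dep sel p k N x : dep (k + N) (shev sel p k N x).
Proof.
move=> v v' H; rewrite /shev (@trajF_dep _ sel k v v'); last first.
  by move=> i ik; apply: H; apply: leq_trans ik (leq_addr _ _).
apply: stayb_dep => i iN; rewrite /shiftk; apply: H; by rewrite ltn_add2l.
Qed.

Lemma nshev_dep sel p k N x : dep (k + N) (fun v => ~~ shev sel p k N x v).
Proof. by move=> v v' H; rewrite (@shev_dep sel p k N x v v' H). Qed.

Lemma concat_agree k v v' i : (i < k)%N -> concatb k v v' i = v i.
Proof. by rewrite /concatb => ->. Qed.

Lemma shev_Ex sel p k N x :
  Ex (k + N) (fun v => (shev sel p k N x v)%:R : R) =
  Ex k (fun v => stP sel p N (trajF sel v k x)).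
Proof.
rewrite Ex_markov; congr Ex; apply/funext => v; rewrite /stP /shev.
congr Ex; apply/funext => v'; rewrite shiftk_concat.
by rewrite (@trajF_dep _ sel k (concatb k v v') v) // => i; apply: concat_agree.
Qed.

Lemma nshev_Ex sel p k N x :
  Ex (k + N) (fun v => (~~ shev sel p k N x v)%:R : R) =
  Ex k (fun v => nP sel p N (trajF sel v k x)).
Proof.
rewrite Ex_markov; congr Ex; apply/funext => v; rewrite /nP /shev.
congr Ex; apply/funext => v'; rewrite shiftk_concat.
by rewrite (@trajF_dep _ sel k (concatb k v v') v) // => i; apply: concat_agree.
Qed.

Lemma stay_of sel p N y v : (forall i, (i <= N)%N -> p (trajF sel v i y)) -> stayb sel p N y v.
Proof.
elim: N y v => [|N IH] y v H /=; first by rewrite andbT (H 0%N).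
rewrite (H 0%N) //=; apply: IH => i iN; exact: (H i.+1).
Qed.

Lemma stay_to sel p N y v : stayb sel p N y v -> forall i, (i <= N)%N -> p (trajF sel v i y).
Proof.
elim: N y v => [|N IH] y v /=.
  by rewrite andbT => py [|i].
move=> /andP[py H] [|i] //= iN; exact: IH.
Qed.

Lemma stay_S sel p N y v : stayb sel p N.+1 y v -> stayb sel p N y v.
Proof.
move=> H; apply: stay_of => i iN; apply: (stay_to H); exact: leqW.
Qed.

Lemma exists_nat (A : R) : exists M : nat, A <= M%:R.
Proof.
exists (Num.Def.archi_bound (Num.max A 0)).
apply: le_trans (ltW (archi_boundP _)); first by rewrite le_max lexx.
by rewrite le_max lexx orbT.
Qed.

Lemma geo_small (C eps : R) : 0 < eps -> exists N : nat, (7/8 : R) ^+ N * C <= eps.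
Proof.
move=> e0.
have bern : forall N : nat, 1 + N%:R / 7 <= (8/7 : R) ^+ N.
  elim => [|N IH]; first by rewrite expr0 mul0r addr0.
  rewrite exprS -natr1.
  have : 0 <= (8/7 : R) ^+ N by rewrite exprn_ge0.
  have hN : (0:R) <= N%:R by rewrite ler0n.
  move: IH; set t := (8/7 : R) ^+ N => IH h; lra.
have [N HN] := exists_nat (7 * Num.max C 0 / eps).
exists N.
have hC : C <= Num.max C 0 by rewrite le_max lexx.
have hC0 : 0 <= Num.max C 0 by rewrite le_max lexx orbT.
have ex : (7/8 : R) ^+ N * (8/7) ^+ N = 1.
  by rewrite -exprMn (_ : (7/8 * (8/7) : R) = 1) ?expr1n //; field.
have g0 : 0 <= (7/8 : R) ^+ N by rewrite exprn_ge0.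
have b := bern N.
move: ex g0 b; set g := (7/8 : R) ^+ N; set G := (8/7 : R) ^+ N => ex g0 b.
have HN' : 7 * Num.max C 0 <= eps * N%:R.
  by rewrite -ler_pdivrMl // mulrC.
have h1 : g * C <= g * Num.max C 0 by rewrite ler_wpM2l.
have hN : (0:R) <= N%:R by rewrite ler0n.
have h2 : g * N%:R <= 7 by nra.
have h3 : g * (7 * Num.max C 0) <= g * (eps * N%:R) by rewrite ler_wpM2l.
have h4 : eps * (g * N%:R) <= eps * 7 by rewrite ler_wpM2l // ltW.
nra.
Qed.

Lemma ereal_eps0 (e : \bar R) : (0 <= e)%E -> (forall eps : R, 0 < eps -> (e <= eps%:E)%E) -> e = 0%E.
Proof.
case: e => [r| |] //= r0 H.
  apply/eqP; rewrite eqe; rewrite lee_fin in r0.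
  rewrite eq_le r0 andbT; apply/negPn/negP; rewrite -ltNge => rp.
  have := H (r / 2); rewrite lee_fin; have : 0 < r / 2 by lra.
  by move=> h /(_ h); lra.
by have := H 1 ltr01.
Qed.


Lemma num1 (M x eps : R) (k : nat) : 0 <= M -> 0 < eps ->
  let L := M + 9 / eps + `|x| in let a := L + 1 - x in let D := 3 * a / eps in
  let lo := x - D in 3 * phR L lo x / eps <= k%:R ->
  PhiS L lo k x + BM M L <= eps.
Proof.
move=> M0 e0 L a D lo Hk.
have ie : 9 / eps * eps = 9 by rewrite divfK // gt_eqF.
have ie0 : 0 < 9 / eps by rewrite divr_gt0.
have ax : x <= `|x| by rewrite ler_norm.
have nx : 0 <= `|x| by rewrite normr_ge0.
have a1 : 1 <= a by rewrite /a /L; lra.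
have De : D * eps = 3 * a by rewrite /D divfK // gt_eqF.
have D0 : 0 < D by rewrite /D divr_gt0 // mulr_gt0 //; lra.
have hL : L + 1 - lo = a + D by rewrite /lo /a; ring.
have hh : hR L lo x <= eps / 3.
  rewrite /hR hL -/a /D; apply: (le_by_diff (num := eps * eps) (den := 3 * (eps + 3))).
  - lra.
  - nra.
  - by field; repeat (apply/andP; split); first [lra | (apply: lt0r_neq0; apply: addr_gt0; [apply: mulr_gt0|]; lra)].
have hh0 : 0 <= hR L lo x by rewrite /hR hL -/a divr_ge0 //; lra.
have ph : phR L lo x = (D + 1) * a by rewrite /phR /lo /a; ring.
have ph0 : 0 <= phR L lo x by rewrite ph; nra.
have hk : phR L lo x / (k.+1)%:R <= eps / 3.
  have kk : (k.+1)%:R = k%:R + 1 :> R by rewrite natr1.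
  rewrite ler_pdivrMr ?ltr0n // kk.
  move: Hk; rewrite ler_pdivrMr // => Hk.
  set pp := phR L lo x in Hk ph0 *.
  have : k%:R * eps = eps * k%:R by rewrite mulrC.
  set q := k%:R * eps; lra.
have hB : BM M L <= eps / 3.
  rewrite /BM; have -> : (L < M) = false by apply/negbTE; rewrite -leNgt /L; lra.
  have -> : L - M + 3 = 9 / eps + `|x| + 3 by rewrite /L; ring.
  set t := 9 / eps + `|x| + 3.
  have t0 : 0 < t by rewrite /t; lra.
  apply: (le_by_diff (num := eps * t - 9) (den := 3 * t)).
  - lra.
  - rewrite /t; have : 0 <= eps * `|x| by rewrite mulr_ge0 // ltW.
    rewrite mulrDr mulrDr (mulrC eps (9 / eps)) ie; lra.
  - by field; lra.
rewrite /PhiS (max_l hh0) (max_l ph0).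
move: hk; set u := phR L lo x / _ => hk; lra.
Qed.

Lemma num2 (lo0 y eps : R) (N : nat) : lo0 <= 0 -> 0 < eps -> lo0 <= y ->
  let D := 2 * (2 - lo0) / eps in let lo := lo0 - D in
  2 * ((3 - lo) * (2 - lo0)) / eps <= N%:R ->
  PhiS 1 lo N y <= eps.
Proof.
move=> l0 e0 ly D lo HN.
have De : D * eps = 2 * (2 - lo0) by rewrite /D divfK // gt_eqF.
have D0 : 0 < D by rewrite /D divr_gt0 // mulr_gt0 //; lra.
have hh : Num.max (hR 1 lo y) 0 <= eps / 2.
  rewrite ge_max; apply/andP; split; last by rewrite divr_ge0 //; lra.
  rewrite /hR (_ : 1 + 1 - lo = (2 - lo0) + D); last by rewrite /lo; ring.
  apply: (@le_trans _ _ ((2 - lo0) / ((2 - lo0) + D))).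
    by rewrite ler_pM2r ?invr_gt0; lra.
  rewrite /D; apply: (le_by_diff (num := eps * eps) (den := 2 * (eps + 2))).
  - lra.
  - nra.
  - by field; repeat (apply/andP; split); first [lra | (apply: lt0r_neq0; nra)].
have hp : Num.max (phR 1 lo y) 0 <= (3 - lo) * (2 - lo0).
  rewrite ge_max; apply/andP; split; last by apply: mulr_ge0; rewrite /lo; lra.
  rewrite /phR; case: (leP 2 y) => y2.
    have : 0 <= (3 - lo) * (2 - lo0) by apply: mulr_ge0; rewrite /lo; lra.
    have : 0 <= y - lo + 1 by rewrite /lo; lra.
    nra.
  have h1 : 0 <= y - lo + 1 by rewrite /lo; lra.
  have h2 : y - lo + 1 <= 3 - lo by lra.
  have h3 : 0 <= 1 + 1 - y by lra.
  have h4 : 1 + 1 - y <= 2 - lo0 by lra.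
  nra.
rewrite /PhiS.
have hk : Num.max (phR 1 lo y) 0 / (N.+1)%:R <= eps / 2.
  have kk : (N.+1)%:R = N%:R + 1 :> R by rewrite natr1.
  rewrite ler_pdivrMr ?ltr0n // kk.
  move: HN; rewrite ler_pdivrMr // => HN.
  have : N%:R * eps <= eps * N%:R by rewrite mulrC.
  move: hp HN; set pp := (3 - lo) * (2 - lo0); set q := N%:R * eps => hp HN hq.
  have m0 : 0 <= Num.max (phR 1 lo y) 0 by rewrite le_max lexx orbT.
  move: m0 hp; set m := Num.max (phR 1 lo y) 0 => m0 hp.
  have e1 : eps / 2 * (N%:R + 1) = (eps * N%:R) / 2 + eps / 2 by field.
  rewrite e1; lra.
move: hk hh; set m1 := Num.max (phR 1 lo y) 0 / _; set m2 := Num.max (hR 1 lo y) 0.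
lra.
Qed.

End Gen.


Section Main.
Variables (R : realType) (d : measure_display) (T : measurableType d)
  (P : probability T R) (X : nat -> T -> bool).
Variable HX : iid_fair_coins P X.

Lemma evm n F : dep n F -> measurable [set w | F (X^~ w)].
Proof. by move=> dF; case: (meas_ev HX dF). Qed.

Lemma evP n F : dep n F -> P [set w | F (X^~ w)] = (Ex n (fun v => (F v)%:R))%:E.
Proof. by move=> dF; case: (meas_ev HX dF). Qed.

Lemma traj_meas (sel : bool -> R -> R) n x (Q : R -> bool) : measurable [set w | Q (trajF sel (X^~ w) n x)].
Proof.
apply: (@evm n (fun v => Q (trajF sel v n x))) => v v' H.
by rewrite (trajF_dep _ _ H).
Qed.

Lemma limit_bound (E : nat -> set T) (e : \bar R) :
  (forall N, measurable (E N)) -> (forall N, E N `<=` E N.+1) ->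
  (forall N, (P (E N) <= e)%E) -> (P (\bigcup_N E N) <= e)%E.
Proof.
move=> mE inc PE.
have mU : measurable (\bigcup_N E N) by apply: bigcupT_measurable.
have homo : {homo E : n m / (n <= m)%N >-> (n <= m)%O}.
  move=> n m nm; rewrite subsetEset; elim: m nm => [|m IH].
    by rewrite leqn0 => /eqP ->.
  rewrite leq_eqVlt => /orP[/eqP ->//|]; rewrite ltnS => /IH h.
  by apply: subset_trans h (inc m).
have Hc := @nondecreasing_cvg_mu _ _ _ P _ mE mU homo.
rewrite -(cvg_lim _ Hc) //; apply: lime_le; first exact: cvgP Hc.
by apply: nearW => N; exact: PE.
Qed.

Lemma AM_null x (M : nat) :
  P (\bigcap_k \bigcup_j [set w | trajF (@gsel R) (X^~ w) (k + j) x < M%:R]) = 0%E.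
Proof.
set AM := \bigcap_k _.
have mAM : measurable AM.
  apply: bigcapT_measurable => k; apply: bigcupT_measurable => j.
  exact: (traj_meas (@gsel R) (k + j) x (fun t => t < M%:R)).
apply: ereal_eps0; first by apply: (measure_ge0 P).
move=> eps e0.
pose L := M%:R + 9 / eps + `|x|. pose a := L + 1 - x. pose D := 3 * a / eps.
pose lo := x - D.
have [k Hk] := exists_nat (3 * phR L lo x / eps).
have nb := @num1 R M%:R x eps k (ler0n _ _) e0 Hk.
pose p := fun t : R => M%:R <= t.
pose E N := [set w | ~~ shev (@gsel R) p k N x (X^~ w)].
have mE N : measurable (E N).
  exact: (evm (@nshev_dep R (@gsel R) p k N x)).
have sub : AM `<=` \bigcup_N E N.
  move=> w /(_ k I) [j _ Hj]; exists j => //=.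
  apply/negP => /stay_to/(_ j (leqnn j)).
  by rewrite /p -trajF_add leNgt Hj.
apply: le_trans (le_measure _ _ _ sub) _; rewrite ?inE //.
  by apply: bigcupT_measurable.
apply: limit_bound => //.
  move=> N w /=; apply: contra => /stay_S //.
move=> N; rewrite /E (evP (@nshev_dep R (@gsel R) p k N x)) nshev_Ex lee_fin.
apply: le_trans nb.
have LM : M%:R <= L.
  rewrite /L; have : 0 <= 9 / eps by rewrite divr_ge0 // ltW.
  have := normr_ge0 x; lra.
apply: (@le_trans _ _ (Ex k (fun v => BM M%:R (trajF (@gsel R) v k x)))).
  apply: Ex_le => v; apply: hit_bound.
  - move=> y; rewrite /p /BM; case: (ltP y M%:R) => h //=.
    by rewrite divr_ge0 //; lra.
  - move=> y _; exact: BM_super.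
apply: le_trans (Q_bound (BM_super (ler0n _ _)) (fun y => BM_split y LM) k x) _.
rewrite lerD2r.
apply: (@le_trans _ _ (stP (@srw R) (fun t => t < L) k x)).
  apply: Ex_le => v.
  have := @stay_cmp R (@gsel R) (@srw R) L k x v (@gsel_mono R) (@gsel_ge_srw R).
  by case: (stayb _ _ _ _ _) => //; case: (stayb _ _ _ _ _) => // /(_ isT).
apply: srw_bound; last exact: srw_sym.
have n9 : 0 <= 9 / eps by rewrite divr_ge0 // ltW.
have xn := ler_norm x; have n0 := normr_ge0 x.
have M0 : (0:R) <= M%:R by rewrite ler0n.
have xL : x <= L by rewrite /L; lra.
have a0 : 0 < a by rewrite /a; lra.
have D0 : 0 < D by rewrite /D divr_gt0 // mulr_gt0.
rewrite -/L -/a -/D; lra.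
Qed.


Lemma AM_meas x (M : nat) :
  measurable (\bigcap_k \bigcup_j [set w | trajF (@gsel R) (X^~ w) (k + j) x < M%:R]).
Proof.
apply: bigcapT_measurable => k; apply: bigcupT_measurable => j.
exact: (traj_meas (@gsel R) (k + j) x (fun t => t < M%:R)).
Qed.

Lemma Sp_eq (sel : bool -> R -> R) x : [set w | (fun n => trajF sel (X^~ w) n x) @ \oo --> +oo%R] =
  \bigcap_(M : nat) \bigcup_k \bigcap_j [set w | M%:R <= trajF sel (X^~ w) (k + j) x].
Proof.
apply/seteqP; split => w /=.
  move/cvgryPge => H M _; have [k _ Hk] := H M%:R.
  by exists k => // j _; apply: Hk; rewrite /= leq_addr.
move=> H; apply/cvgryPge => A.
have [M hM] := exists_nat A; have [k _ Hk] := H M I.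
exists k => // n /= kn; have := Hk (n - k)%N I; rewrite /= subnKC // => h.
exact: le_trans hM h.
Qed.

Lemma Sm_eq (sel : bool -> R -> R) x : [set w | (fun n => trajF sel (X^~ w) n x) @ \oo --> -oo%R] =
  \bigcap_(M : nat) \bigcup_k \bigcap_j [set w | trajF sel (X^~ w) (k + j) x <= - M%:R].
Proof.
apply/seteqP; split => w /=.
  move/cvgrNyPle => H M _; have [k _ Hk] := H (- M%:R).
  by exists k => // j _; apply: Hk; rewrite /= leq_addr.
move=> H; apply/cvgrNyPle => A.
have [M hM] := exists_nat (- A); have [k _ Hk] := H M I.
exists k => // n /= kn; have := Hk (n - k)%N I; rewrite /= subnKC // => h.
apply: le_trans h _; rewrite lerNl; exact: hM.
Qed.

Lemma Sp_meas (sel : bool -> R -> R) x : measurable [set w | (fun n => trajF sel (X^~ w) n x) @ \oo --> +oo%R].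
Proof.
rewrite Sp_eq; apply: bigcapT_measurable => M; apply: bigcupT_measurable => k.
apply: bigcapT_measurable => j; exact: (traj_meas sel (k + j) x (fun t => M%:R <= t)).
Qed.

Lemma Sm_meas (sel : bool -> R -> R) x : measurable [set w | (fun n => trajF sel (X^~ w) n x) @ \oo --> -oo%R].
Proof.
rewrite Sm_eq; apply: bigcapT_measurable => M; apply: bigcupT_measurable => k.
apply: bigcapT_measurable => j; exact: (traj_meas sel (k + j) x (fun t => t <= - M%:R)).
Qed.

Lemma part1 x : P [set w | (fun n => trajF (@gsel R) (X^~ w) n x) @ \oo --> +oo%R] = 1%E.
Proof.
set S := [set w | _].
have mS : measurable S by exact: Sp_meas.
have sub : ~` S `<=` \bigcup_(M : nat)
    \bigcap_k \bigcup_j [set w | trajF (@gsel R) (X^~ w) (k + j) x < M%:R].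
  move=> w nS; apply: contrapT => nU; apply: nS; rewrite /S Sp_eq => M _.
  apply: contrapT => nk; apply: nU; exists M => // k _.
  apply: contrapT => nj; apply: nk; exists k => // j _ /=.
  rewrite leNgt; apply/negP => hj; apply: nj; by exists j.
have nU : P.-negligible (\bigcup_(M : nat)
    \bigcap_k \bigcup_j [set w | trajF (@gsel R) (X^~ w) (k + j) x < M%:R]).
  apply: negligible_bigcup => M; apply/negligibleP; [exact: AM_meas|exact: AM_null].
have neg : P.-negligible (~` S).
  by case: nU => B [mB PB sB]; exists B; split => //; apply: subset_trans sub sB.
have P0 : P (~` S) = 0%E by apply/negligibleP => //; exact: measurableC.
rewrite -(setCK S) probability_setC; last exact: measurableC.
by rewrite P0 sube0.
Qed.

Lemma Bk_null x k : P (\bigcap_j [set w | 2 <= trajF (@ginvsel R) (X^~ w) (k + j) x]) = 0%E.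
Proof.
set B := \bigcap_j _.
have mB : measurable B.
  apply: bigcapT_measurable => j; exact: (traj_meas (@ginvsel R) (k + j) x (fun t => 2 <= t)).
apply: ereal_eps0; first by apply: (measure_ge0 P).
move=> eps e0.
have [N HN] := geo_small ((Num.max x 0 + k%:R) / 2) e0.
pose p := fun t : R => 2 <= t.
pose F := [set w | shev (@ginvsel R) p k N x (X^~ w)].
have mF : measurable F by exact: (evm (@shev_dep R (@ginvsel R) p k N x)).
have sub : B `<=` F.
  move=> w Hw; rewrite /F /=; apply: stay_of => i iN; rewrite -trajF_add; exact: (Hw i I).
have hle : (P B <= P F)%E by apply: le_measure; rewrite ?inE.
apply: le_trans hle _.
rewrite /F (evP (@shev_dep R (@ginvsel R) p k N x)) shev_Ex lee_fin.
apply: le_trans HN.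
apply: (@le_trans _ _ (Ex k (fun v => (7/8 : R) ^+ N * Num.max (trajF (@ginvsel R) v k x) 0 / 2))).
  by apply: Ex_le => v; exact: inv_bound.
rewrite -[X in _ <= X](@Ex_cst R k); apply: Ex_le => v.
have h1 := traj_ginv_ub v k x.
have h2 : 0 <= Num.max x 0 + k%:R by rewrite addr_ge0 ?ler0n // le_max lexx orbT.
have h3 : Num.max (trajF (@ginvsel R) v k x) 0 <= Num.max x 0 + k%:R.
  by rewrite ge_max h1 h2.
rewrite -mulrA ler_wpM2l ?exprn_ge0 //.
by rewrite ler_pM2r ?invr_gt0 ?ltr0n.
Qed.

Lemma Ck_null x k : P (\bigcap_j [set w | trajF (@ginvsel R) (X^~ w) (k + j) x < 1]) = 0%E.
Proof.
set B := \bigcap_j _.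
have mB : measurable B.
  apply: bigcapT_measurable => j; exact: (traj_meas (@ginvsel R) (k + j) x (fun t => t < 1)).
apply: ereal_eps0; first by apply: (measure_ge0 P).
move=> eps e0.
pose lo0 := Num.min x 0 - k%:R.
have l0 : lo0 <= 0.
  rewrite /lo0; have : Num.min x 0 <= 0 by rewrite ge_min lexx orbT.
  have := ler0n R k; lra.
pose D := 2 * (2 - lo0) / eps. pose lo := lo0 - D.
have D0 : 0 < D by rewrite /D divr_gt0 // mulr_gt0 //; lra.
have [N HN] := exists_nat (2 * ((3 - lo) * (2 - lo0)) / eps).
pose p := fun t : R => t < 1.
pose F := [set w | shev (@ginvsel R) p k N x (X^~ w)].
have mF : measurable F by exact: (evm (@shev_dep R (@ginvsel R) p k N x)).
have sub : B `<=` F.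
  move=> w Hw; rewrite /F /=; apply: stay_of => i iN; rewrite -trajF_add; exact: (Hw i I).
have hle : (P B <= P F)%E by apply: le_measure; rewrite ?inE.
apply: le_trans hle _.
rewrite /F (evP (@shev_dep R (@ginvsel R) p k N x)) shev_Ex lee_fin.
rewrite -[X in _ <= X](@Ex_cst R k); apply: Ex_le => v.
set y := trajF _ v k x.
have ly : lo0 <= y by exact: traj_ginv_lb.
have -> : stP (@ginvsel R) p N y = stP (@srw' R) p N y.
  rewrite /stP; congr Ex; apply/funext => w.
  have HH := @stay_eqdyn R (@ginvsel R) (@srw' R) p N y w.
  by rewrite HH // => c t ht; exact: ginv_srw'.
apply: le_trans (@num2 R lo0 y eps N l0 e0 ly HN).
apply: srw_bound; last exact: srw'_sym.
have D0' : 0 < 2 * (2 - lo0) / eps := D0. move: D0'; set DD := 2 * (2 - lo0) / eps => D0'. lra.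
Qed.

Lemma part2p x : P [set w | (fun n => trajF (@ginvsel R) (X^~ w) n x) @ \oo --> +oo%R] = 0%E.
Proof.
apply/negligibleP; first exact: Sp_meas.
have nU : P.-negligible (\bigcup_k \bigcap_j [set w | 2 <= trajF (@ginvsel R) (X^~ w) (k + j) x]).
  apply: negligible_bigcup => k; apply/negligibleP; last exact: Bk_null.
  apply: bigcapT_measurable => j; exact: (traj_meas (@ginvsel R) (k + j) x (fun t => 2 <= t)).
case: nU => B [mB PB sB]; exists B; split => //; apply: subset_trans sB.
move=> w /= /cvgryPge /(_ 2) [k _ Hk]; exists k => // j _; apply: Hk; by rewrite /= leq_addr.
Qed.

Lemma part2m x : P [set w | (fun n => trajF (@ginvsel R) (X^~ w) n x) @ \oo --> -oo%R] = 0%E.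
Proof.
apply/negligibleP; first exact: Sm_meas.
have nU : P.-negligible (\bigcup_k \bigcap_j [set w | trajF (@ginvsel R) (X^~ w) (k + j) x < 1]).
  apply: negligible_bigcup => k; apply/negligibleP; last exact: Ck_null.
  apply: bigcapT_measurable => j; exact: (traj_meas (@ginvsel R) (k + j) x (fun t => t < 1)).
case: nU => B [mB PB sB]; exists B; split => //; apply: subset_trans sB.
move=> w /= /cvgrNyPlt /(_ 1) [k _ Hk]; exists k => // j _; apply: Hk; by rewrite /= leq_addr.
Qed.

End Main.

Unset Implicit Arguments.

Theorem mainTheorem10 (R : realType) (d : measure_display) (T : measurableType d)
    (P : probability T R) (X : nat -> T -> bool) :
  iid_fair_coins P X ->
  (forall x : R,
     P [set w | (fun n => rcomp (@gsel R) (X ^~ w) n x) @ \oo --> +oo%R] = 1%E) /\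
  (forall x : R,
     (1 - P [set w | (fun n => rcomp (@ginvsel R) (X ^~ w) n x) @ \oo --> +oo%R]
        - P [set w | (fun n => rcomp (@ginvsel R) (X ^~ w) n x) @ \oo --> -oo%R]
      = 1)%E).
Proof.
move=> HX.
have E (sel : bool -> R -> R) (x : R) w : (fun n => rcomp sel (X^~ w) n x) = (fun n => trajF sel (X^~ w) n x).
  by apply/funext => n; rewrite rcomp_trajF.
split => x.
  have -> : [set w | (fun n => rcomp (@gsel R) (X ^~ w) n x) @ \oo --> +oo%R] =
            [set w | (fun n => trajF (@gsel R) (X ^~ w) n x) @ \oo --> +oo%R].
    by apply/funext => w /=; rewrite (E (@gsel R) x w).
  exact: part1.
have -> : [set w | (fun n => rcomp (@ginvsel R) (X ^~ w) n x) @ \oo --> +oo%R] =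
          [set w | (fun n => trajF (@ginvsel R) (X ^~ w) n x) @ \oo --> +oo%R].
  by apply/funext => w /=; rewrite (E (@ginvsel R) x w).
have -> : [set w | (fun n => rcomp (@ginvsel R) (X ^~ w) n x) @ \oo --> -oo%R] =
          [set w | (fun n => trajF (@ginvsel R) (X ^~ w) n x) @ \oo --> -oo%R].
  by apply/funext => w /=; rewrite (E (@ginvsel R) x w).
by rewrite part2p // part2m // !sube0.
Qed.
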